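(* In the setting described in the context, let $\phi$ be an automorphism of the graph $\bar\Gamma$, let $\tau'=\phi(\tau)$ with root $r'=\phi(r)$, and let $wt'$ be the re-gauged weight function. Then: (1) There is at most one $*$-automorphism $\psi$ of $\mathscr A$ satisfying $\psi(wt(f))=wt'(\phi(f))$ for every oriented edge $f$; it is determined by the requirement $\psi(wt(f))=wt'(\phi(f))$ for the oriented edges $f$ not in $\tau$. (2) The elements $wt'(\phi(f))$, $f$ ranging over the oriented edges of $\bar\Gamma$, generate $\mathscr A$ as a $C^*$-algebra (so whether such a $\psi$ defines an automorphism only needs to be checked on the generators $wt(f)$). (3) $\psi$ is induced by a base change of $\pi_1(\bar\Gamma,r)$: there is a group automorphism $\beta$ of $\pi_1(\bar\Gamma,r)$ with $\beta([l^\tau(f)])=P([l^{\tau'}(\phi(f))])$ for every oriented edge $f$ not in $\tau$, and if $\psi$ as in (1) exists then $\psi(\rho(x))=\rho(\beta(x))$ for all $x\in\pi_1(\bar\Gamma,r)$.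
   Context: $\bar\Gamma$ is a finite connected graph (multiple edges and loops allowed); an oriented edge $f$ from $x$ to $y$ has reverse $\bar f$. An automorphism $\phi$ of $\bar\Gamma$ is a pair of bijections of the vertex set and of the edge set preserving incidence; it acts on oriented edges. $\tau$ is a spanning tree of $\bar\Gamma$ with root $r$. $\mathscr A$ is a unital $C^*$-algebra and $wt$ assigns to every oriented edge $f$ a unitary $wt(f)\in\mathscr A$ with $wt(\bar f)=wt(f)^*$, $wt(f)=1$ whenever the underlying edge lies in $\tau$, and such that $\mathscr A$ is generated as a $C^*$-algebra by all $wt(f)$. For a closed walk $\gamma$ at $r$ traversing $f_1,\dots,f_m$ in order put $\rho(\gamma)=wt(f_m)\cdots wt(f_1)$; this gives a group homomorphism $\rho:\pi_1(\bar\Gamma,r)\to U(\mathscr A)$. For a spanning tree $\sigma$ and vertices $x,y$ let $\sigma[x\to y]$ denote the unique non-backtracking path in $\sigma$ from $x$ to $y$. For an oriented edge $f$ from $x$ to $y$, $l^\tau(f)$ is the closed walk $\tau[r\to x]$, $f$, $\tau[y\to r]$ at $r$, and $l^{\tau'}(f)$ is the closed walk $\tau'[r'\to x]$, $f$, $\tau'[y\to r']$ at $r'$. $P:\pi_1(\bar\Gamma,r')\to\pi_1(\bar\Gamma,r)$ is the isomorphism $[\gamma]\mapsto[\tau[r\to r']\,\gamma\,\tau[r'\to r]]$. The re-gauged weight function for the pushed-forward spanning tree $\tau'$ is $wt'(f):=\rho(P([l^{\tau'}(f)]))$. *)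

(* Defs.v *)
From HB Require Import structures.
From mathcomp Require Import all_boot all_order all_algebra.
From mathcomp Require Import complex reals.

Set Implicit Arguments.
Unset Strict Implicit.
Unset Printing Implicit Defensive.

Import Order.TTheory GRing.Theory Num.Theory.
Local Open Scope ring_scope.

(* Graphs.  V = vertices, D = oriented edges, rev f = \bar f,          *)
Section Graph.
Variables (V D : finType) (rev : D -> D) (src : D -> V).

Definition tgt (f : D) : V := src (rev f).

(* rev is a fixed-point-free involution (loops and multi-edges allowed) *)
Definition graph_axioms : Prop := involutive rev /\ (forall f, rev f != f).

Fixpoint walk (x y : V) (g : seq D) : bool :=
  match g with
  | [::] => x == y
  | f :: g' => (src f == x) && walk (tgt f) y g'
  end.

Fixpoint reduced (g : seq D) : bool :=
  match g with
  | f :: ((h :: _) as g') => (h != rev f) && reduced g'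
  | _ => true
  end.

Definition walk_in (S : {set D}) (x y : V) (g : seq D) : bool :=
  walk x y g && all (fun f => f \in S) g.

Definition connected_graph : Prop := forall x y : V, exists g, walk x y g.

Definition is_cycle (g : seq D) : Prop :=
  exists x, [/\ g != [::], walk x x g, reduced g & uniq (map src g)].

Definition spanning_tree (tau : {set D}) : Prop :=
  [/\ forall f, (rev f \in tau) = (f \in tau),
      forall x y, exists g, walk_in tau x y g
    & forall g, all (fun f => f \in tau) g -> ~ is_cycle g].

(* tp x y is a non-backtracking path in tau from x to y; for a tree this
   is the unique such path tau[x -> y] *)
Definition tree_paths (tau : {set D}) (tp : V -> V -> seq D) : Prop :=
  forall x y, walk_in tau x y (tp x y) && reduced (tp x y).

Fixpoint reduce (g : seq D) : seq D :=
  match g with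
  | [::] => [::]
  | f :: g' =>
      match reduce g' with
      | h :: g'' => if h == rev f then g'' else f :: h :: g''
      | [::] => [:: f]
      end
  end.

(* elements of pi_1(Gamma, r) : reduced closed walks at r (normal forms
   of homotopy classes); the product of x and y is reduce (x ++ y) and the
   class of a closed walk g is reduce g *)
Definition pi1 (r : V) (g : seq D) : bool := walk r r g && reduced g.

Definition pi1_aut (r : V) (beta : seq D -> seq D) : Prop :=
  [/\ forall x, pi1 r x -> pi1 r (beta x),
      forall x y, pi1 r x -> pi1 r y ->
        beta (reduce (x ++ y)) = reduce (beta x ++ beta y),
      forall x y, pi1 r x -> pi1 r y -> beta x = beta y -> x = y
    & forall y, pi1 r y -> exists2 x, pi1 r x & beta x = y].

Definition graph_aut (phiV : V -> V) (phiD : D -> D) : Prop :=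
  [/\ bijective phiV, bijective phiD,
      forall f, phiD (rev f) = rev (phiD f)
    & forall f, src (phiD f) = phiV (src f)].

End Graph.

Section Cstar.
Variables (R : realType) (A : algType R[i]).
Local Open Scope complex_scope.

Definition cauchy_seq (nrm : A -> R) (u : nat -> A) : Prop :=
  forall e : R, 0 < e -> exists N, forall m n, (N <= m)%N -> (N <= n)%N ->
    nrm (u m - u n) < e.

Definition converges_to (nrm : A -> R) (u : nat -> A) (l : A) : Prop :=
  forall e : R, 0 < e -> exists N, forall n, (N <= n)%N -> nrm (u n - l) < e.

Record cstar_struct := CStar {
  star : A -> A;
  nrm : A -> R;
  star_invol : involutive star;
  star_add : forall a b, star (a + b) = star a + star b;
  star_scale : forall (c : R[i]) a, star (c *: a) = c^* *: star a;
  star_mul : forall a b, star (a * b) = star b * star a;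
  nrm_eq0 : forall a, nrm a = 0 -> a = 0;
  nrm_triangle : forall a b, nrm (a + b) <= nrm a + nrm b;
  nrm_scale : forall (c : R[i]) a, nrm (c *: a) = ComplexField.Normc.normc c * nrm a;
  nrm_submul : forall a b, nrm (a * b) <= nrm a * nrm b;
  nrm_cstar : forall a, nrm (star a * a) = nrm a ^+ 2;
  nrm_complete : forall u, cauchy_seq nrm u -> exists l, converges_to nrm u l
}.

Variable C : cstar_struct.

Definition unitary (u : A) : Prop :=
  star C u * u = 1 /\ u * star C u = 1.

Definition cstar_subalg (B : A -> Prop) : Prop :=
  B 1 /\
  [/\ forall a b, B a -> B b -> B (a + b),
      forall (c : R[i]) a, B a -> B (c *: a),
      forall a b, B a -> B b -> B (a * b),
      forall a, B a -> B (star C a)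
    & forall a, (forall e : R, 0 < e -> exists b, B b /\ nrm C (a - b) < e) -> B a].

Definition cstar_generates (S : A -> Prop) : Prop :=
  forall B, cstar_subalg B -> (forall s, S s -> B s) -> forall a, B a.

Definition star_aut (psi : A -> A) : Prop :=
  [/\ bijective psi,
      forall a b, psi (a + b) = psi a + psi b,
      forall (c : R[i]) a, psi (c *: a) = c *: psi a,
      forall a b, psi (a * b) = psi a * psi b
    & forall a, psi (star C a) = star C (psi a)].

End Cstar.

(* rho(f_1 ... f_m) = wt f_m * ... * wt f_1 *)
Definition rho (D : Type) (A : pzRingType) (wt : D -> A) (g : seq D) : A :=
  foldl (fun acc f => (wt f * acc)%R) 1%R g.

(* Main.v *)
Require Import Defs.
From HB Require Import structures.
From mathcomp Require Import all_boot all_order all_algebra.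
From mathcomp Require Import complex reals zify ring lra.
Set Implicit Arguments.
Unset Strict Implicit.
Unset Printing Implicit Defensive.
Import Order.TTheory GRing.Theory Num.Theory.
Local Open Scope ring_scope.
Section Red.
Variables (V D : finType) (rv : D -> D) (src : D -> V).
Hypothesis rvK : involutive rv.

Local Notation reduce := (reduce rv).
Local Notation reduced := (reduced rv).

Lemma reduced_behead f g : reduced (f :: g) -> reduced g.
Proof. by case: g => //= h g /andP[]. Qed.

Lemma reduce_reduced g : reduced (reduce g).
Proof.
elim: g => //= f g IH.
case E: (reduce g) => [|h t] //.
rewrite E in IH.
case: ifP => [_|/negbT hf]; first exact: reduced_behead IH.
by rewrite /= hf.
Qed.

Lemma reducedK g : reduced g -> reduce g = g.
Proof.
elim: g => //= f g IH Hg.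
rewrite IH; last exact: reduced_behead Hg.
case: g Hg {IH} => //= h t /andP[hf _].
by rewrite (negbTE hf).
Qed.

Lemma reduce_cons f g : reduce (f :: g) = reduce (f :: reduce g).
Proof. by rewrite /= (reducedK (reduce_reduced g)). Qed.

Lemma reduce_catr u v : reduce (u ++ v) = reduce (u ++ reduce v).
Proof.
elim: u => [|f u IH] /=; first by rewrite (reducedK (reduce_reduced v)).
by rewrite IH.
Qed.

Lemma reduce_cancel f q : reduce (f :: rv f :: q) = reduce q.
Proof.
rewrite /=.
have := reduce_reduced q.
case E: (reduce q) => [|h t] Ht; first by rewrite eqxx.
move: Ht; case: (eqVneq h f) => [->|hf] Ht.
  rewrite rvK eqxx.
  case: t Ht {E} => [|h' t] /=; first by [].
  by move=> /andP[/negbTE -> _].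
have : (h == rv (rv f)) = false by rewrite rvK; exact/negbTE.
by move=> -> /=; rewrite eqxx.
Qed.

Lemma reduce_catl u v : reduce (u ++ v) = reduce (reduce u ++ v).
Proof.
elim: u v => [|f u IH] v /=; first by [].
rewrite -/(reduce (f :: (u ++ v))) reduce_cons IH -reduce_cons.
case E: (reduce u) => [|h t] //.
case: ifP => // /eqP ->.
by rewrite cat_cons reduce_cancel.
Qed.

Lemma reduce_mid u m w : reduce (u ++ reduce m ++ w) = reduce (u ++ m ++ w).
Proof. by rewrite reduce_catr -reduce_catl -reduce_catr. Qed.

Lemma reduce_nil_mid u m w : reduce m = [::] -> reduce (u ++ m ++ w) = reduce (u ++ w).
Proof. by move=> Hm; rewrite -reduce_mid Hm. Qed.

Lemma mem_reduce g f : f \in reduce g -> f \in g.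
Proof.
elim: g => //= e g IH.
rewrite in_cons.
case E: (reduce g) => [|h t] Hf.
  by move: Hf; rewrite inE => ->.
move: Hf; case: ifP => _ Hf.
  by rewrite IH ?orbT // E inE Hf orbT.
move: Hf; rewrite !in_cons => /orP[->//|Hf].
by rewrite IH ?orbT // E.
Qed.

Local Notation tgt := (tgt rv src).
Local Notation walk := (walk rv src).

Lemma reduce_walk x y g : walk x y g -> walk x y (reduce g).
Proof.
elim: g x => //= f g IH x /andP[/eqP Hx Hw].
have := IH _ Hw.
case E: (reduce g) => [|h t] /=.
  by rewrite Hx eqxx.
case: ifP => [/eqP ->|_] /=; last by rewrite Hx eqxx.
by rewrite /tgt rvK Hx => /andP[_].
Qed.

Definition wend (x : V) (g : seq D) := last x (map tgt g).

Lemma walk_cat x y g1 g2 :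
  walk x y (g1 ++ g2) = walk x (wend x g1) g1 && walk (wend x g1) y g2.
Proof.
elim: g1 x => [|f g1 IH] x /=; first by rewrite eqxx.
by rewrite IH andbA.
Qed.

Lemma walk_end x y g : walk x y g -> y = wend x g.
Proof.
elim: g x => [|f g IH] x /=; first by move/eqP.
by move=> /andP[_ /IH].
Qed.

Lemma walk_catP x z y g1 g2 : walk x z g1 -> walk z y g2 -> walk x y (g1 ++ g2).
Proof. by move=> H1 H2; rewrite walk_cat -(walk_end H1) H1. Qed.

Lemma walk_catE x y g1 g2 : walk x y (g1 ++ g2) ->
  exists z, walk x z g1 /\ walk z y g2.
Proof. by rewrite walk_cat => /andP[H1 H2]; exists (wend x g1). Qed.

Lemma walk_cons_src x y f g : walk x y (f :: g) -> src f = x.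
Proof. by move=> /= /andP[/eqP]. Qed.

Definition revw (g : seq D) := rev (map rv g).

Lemma revw_cons f g : revw (f :: g) = revw g ++ [:: rv f].
Proof. by rewrite /revw /= rev_cons cats1. Qed.

Lemma walk_revw x y g : walk x y g -> walk y x (revw g).
Proof.
elim: g x => [|f g IH] x /=; first by move/eqP => ->; rewrite eqxx.
move=> /andP[/eqP Hx Hw]; rewrite revw_cons.
apply: (walk_catP (IH _ Hw)).
by rewrite /= /tgt rvK Hx !eqxx.
Qed.

Lemma reduced_cons2 e e' g : reduced (e :: e' :: g) = (e' != rv e) && reduced (e' :: g).
Proof. by []. Qed.

Lemma reduced_cat g1 g2 : reduced (g1 ++ g2) =
  [&& reduced g1, reduced g2 &
     (if g1 is e :: _ then (if g2 is h :: _ then h != rv (last e g1) else true) else true)].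
Proof.
elim: g1 => [|e g1 IH]; first by rewrite /= andbT.
case: g1 IH => [|e' g1] IH.
  by case: g2 {IH} => [|h g2] //=; rewrite andbC.
rewrite cat_cons cat_cons reduced_cons2 -cat_cons IH reduced_cons2.
case: g2 {IH} => [|h g2]; rewrite ?andbT //.
by rewrite !andbA.
Qed.

Lemma reduced_revw g : reduced g -> reduced (revw g).
Proof.
elim: g => [|f g IH] //= Hg; rewrite revw_cons reduced_cat IH ?(reduced_behead Hg) //=.
case: g Hg {IH} => [|h t] //= /andP[hf _].
rewrite revw_cons.
case E: (revw t) => [|a b] /=.
  by rewrite rvK eq_sym.
rewrite last_cat /= rvK eq_sym //.
Qed.


Lemma reduced_rcons_cat g e h k : reduced (rcons g e) -> reduced (h :: k) ->
  h != rv e -> reduced (rcons g e ++ h :: k).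
Proof.
move=> H1 H2 H3; rewrite reduced_cat H1 H2 /=.
by case: g H1 => [|a g] _ //=; rewrite last_rcons.
Qed.

Definition acyclic (S : {set D}) :=
  forall g, all (fun f => f \in S) g -> ~ is_cycle rv src g.

Lemma walk_cycle (S : {set D}) n g x : (size g <= n)%N -> g != [::] -> walk x x g ->
  reduced g -> all (fun f => f \in S) g ->
  exists g', all (fun f => f \in S) g' /\ is_cycle rv src g'.
Proof.
elim: n g x => [|n IH] g x Hs Hne Hw Hr Ha.
  by case: g Hs Hne Hw Hr Ha.
have [Hu|Hu] := boolP (uniq (map src g)).
  by exists g; split => //; exists x; split.
have [d0 _] : exists d0 : D, true by case: g Hne {Hs Hw Hr Ha Hu} => [//|f0 ?] _; exists f0.
case/(uniqPn x): Hu => i [j [ij jn Heq]].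
rewrite size_map in jn.
rewrite !(nth_map d0) // in Heq; last by apply: ltn_trans jn.
set m := take (j - i) (drop i g).
have Hdi : drop i g = m ++ drop j g.
  by rewrite -{1}(cat_take_drop (j - i) (drop i g)) drop_drop subnK // ltnW.
have Hg : g = take i g ++ (m ++ drop j g) by rewrite -Hdi cat_take_drop.
have iS : (i < size g)%N by apply: ltn_trans jn.
have Hsm : size m = (j - i)%N.
  by rewrite size_takel // size_drop leq_sub2r // ltnW.
move: (Hw); rewrite {1}Hg => /walk_catE [z1 [_ Hw1]].
move: (Hw1) => /walk_catE [z2 [Hm Hw2]].
have E1 : src (nth d0 g i) = z1.
  by move: Hw1; rewrite -Hdi (drop_nth d0 iS) => /walk_cons_src.
have E2 : src (nth d0 g j) = z2.
  by move: Hw2; rewrite (drop_nth d0 jn) => /walk_cons_src.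
have Hm' : walk z1 z1 m by rewrite {2}(_ : z1 = z2) // -E1 -E2.
apply: (IH m z1) => //.
- rewrite Hsm; apply: leq_trans (leq_subr _ _) _; by rewrite -ltnS (leq_trans jn Hs).
- by rewrite -size_eq0 Hsm subn_eq0 -ltnNge.
- by move: Hr; rewrite Hg !reduced_cat => /and3P[_ /and3P[]].
- by apply/allP => f /mem_take /mem_drop Hf; exact: (allP Ha).
Qed.

Lemma tree_reduce (S : {set D}) x g : acyclic S -> walk x x g -> all (fun f => f \in S) g ->
  reduce g = [::].
Proof.
move=> Hac Hw Ha.
case E: (reduce g) => [//|f t]; exfalso.
have Hne : reduce g != [::] by rewrite E.
have Har : all (fun f => f \in S) (reduce g).
  by apply/allP => e /mem_reduce He; exact: (allP Ha).
have [g' [Ha' Hc]] := @walk_cycle S (size (reduce g)) (reduce g) x (leqnn _)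
  Hne (reduce_walk Hw) (reduce_reduced g) Har.
exact: (Hac g' Ha' Hc).
Qed.

Lemma tree_path_uniq (S : {set D}) : (forall f, (rv f \in S) = (f \in S)) -> acyclic S ->
  forall g h x y, walk x y g -> walk x y h -> reduced g -> reduced h ->
  all (fun f => f \in S) g -> all (fun f => f \in S) h -> g = h.
Proof.
move=> HS Hac g; elim/last_ind: g => [|g0 e IH] h x y Hg Hh Rg Rh Ag Ah.
  case/lastP: h Hh Rh Ah => [//|h0 e'] Hh Rh Ah; exfalso.
  move/eqP: Hg => Hxy; rewrite -Hxy in Hh.
  have Hne : rcons h0 e' != [::] by rewrite -size_eq0 size_rcons.
  have [g' [Ha' Hc]] := @walk_cycle S _ _ x (leqnn _) Hne Hh Rh Ah.
  exact: (Hac g' Ha' Hc).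
case/lastP: h Hh Rh Ah => [|h0 e'] Hh Rh Ah.
  exfalso; move/eqP: Hh => Hxy; rewrite -Hxy in Hg.
  have Hne : rcons g0 e != [::] by rewrite -size_eq0 size_rcons.
  have [g' [Ha' Hc]] := @walk_cycle S _ _ x (leqnn _) Hne Hg Rg Ag.
  exact: (Hac g' Ha' Hc).
have [Hee|ne] := eqVneq e e'.
  subst e'.
  move: Hg Hh Rg Rh Ag Ah; rewrite -!cats1 !all_cat !reduced_cat.
  move=> /walk_catE [z [Hg0 He]] /walk_catE [z' [Hh0 He']].
  move=> /and3P[Rg0 _ _] /and3P[Rh0 _ _] /andP[Ag0 _] /andP[Ah0 _].
  move: He He' => /= /andP[/eqP Hz _] /andP[/eqP Hz' _].
  rewrite -Hz in Hg0; rewrite -Hz' in Hh0.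
  by rewrite (IH h0 x (src e)).
exfalso.
set w := rcons g0 e ++ revw (rcons h0 e').
have Hrw : revw (rcons h0 e') = rv e' :: revw h0 by rewrite /revw map_rcons rev_rcons.
have Hw : walk x x w := walk_catP Hg (walk_revw Hh).
have Rw : reduced w.
  rewrite /w Hrw; apply: reduced_rcons_cat => //.
    by rewrite -Hrw; exact: reduced_revw.
  by apply: contra ne => /eqP /(can_inj rvK) ->.
have Aw : all (fun f => f \in S) w.
  rewrite /w all_cat Ag /revw all_rev all_map.
  by apply/allP => f Hf /=; rewrite HS; exact: (allP Ah).
have Hne : w != [::] by rewrite /w; case: (g0).
have [g' [Ha' Hc]] := @walk_cycle S _ w x (leqnn _) Hne Hw Rw Aw.
exact: (Hac g' Ha' Hc).
Qed.

End Red.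

Section Morph.
Variables (V D : finType) (rv : D -> D) (src : D -> V).
Variables (m : D -> D) (mV : V -> V).
Hypothesis mrv : forall f, m (rv f) = rv (m f).
Hypothesis msrc : forall f, src (m f) = mV (src f).

Lemma tgt_map f : tgt rv src (m f) = mV (tgt rv src f).
Proof. by rewrite /tgt -mrv msrc. Qed.

Lemma walk_map x y g : walk rv src x y g -> walk rv src (mV x) (mV y) (map m g).
Proof.
elim: g x => [|f g IH] x /=; first by move/eqP ->.
by move=> /andP[/eqP <- /IH]; rewrite msrc tgt_map eqxx.
Qed.

Hypothesis minj : injective m.

Lemma reduced_map g : reduced rv (map m g) = reduced rv g.
Proof.
elim: g => [|f g IH] //=.
case: g IH => [|h g] //= ->.
by rewrite -mrv (inj_eq minj).
Qed.

Lemma reduce_map g : reduce rv (map m g) = map m (reduce rv g).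
Proof.
elim: g => [|f g IH] //=.
rewrite IH; case: (reduce rv g) => [|h t] //=.
by rewrite -mrv (inj_eq minj); case: ifP.
Qed.

Hypothesis mVinj : injective mV.

Lemma cycle_map g : is_cycle rv src g -> is_cycle rv src (map m g).
Proof.
case=> x [Hne Hw Hr Hu]; exists (mV x); split.
- by case: g Hne {Hw Hr Hu}.
- exact: walk_map.
- by rewrite reduced_map.
- by rewrite -map_comp (eq_map msrc) map_comp map_inj_uniq.
Qed.
End Morph.
Section CS.
Variables (R : realType) (A : algType R[i]) (C : cstar_struct A).
Local Notation st := (star C).
Local Notation N := (nrm C).
Local Notation normc := ComplexField.Normc.normc.

Lemma normc_real (k : R) : 0 <= k -> normc (k%:C%C) = k.
Proof. move=> hk. rewrite /ComplexField.Normc.normc /= expr0n /= addr0 sqrtr_sqr ger0_norm //. Qed.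

Lemma conjc_real (k : R) : Num.conj (k%:C%C) = k%:C%C.
Proof. apply/eqP; rewrite eq_complex /= ?oppr0 ?eqxx //. Qed.

Lemma conjc_i : Num.conj ('i%C : R[i]) = - 'i%C.
Proof. apply/eqP; rewrite eq_complex /= ?oppr0 ?eqxx //. Qed.

Lemma normcN1 : normc (-1 : R[i]) = 1.
Proof. rewrite /ComplexField.Normc.normc /= oppr0 expr0n /= addr0 sqrtr_sqr normrN normr1 //. Qed.

Lemma st0 : st 0 = 0.
Proof. by apply: (addrI (st 0)); rewrite -star_add !addr0. Qed.

Lemma stN a : st (- a) = - st a.
Proof. by apply: (addrI (st a)); rewrite -star_add !subrr st0. Qed.

Lemma stB a b : st (a - b) = st a - st b.
Proof. by rewrite star_add stN. Qed.

Lemma st1 : st 1 = 1.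
Proof.
have := star_mul C (st 1) 1.
by rewrite mulr1 !(star_invol C) mulr1 => H; rewrite -H.
Qed.

Lemma N0 : N 0 = 0.
Proof. by have := nrm_scale C 0 0; rewrite scale0r ComplexField.Normc.normc0 mul0r. Qed.

Lemma NN a : N (- a) = N a.
Proof. by rewrite -scaleN1r nrm_scale normcN1 mul1r. Qed.

Lemma N_ge0 a : 0 <= N a.
Proof. have := nrm_triangle C a (- a); rewrite subrr N0 NN => h; lra. Qed.

Lemma NB a b : N (a - b) = N (b - a).
Proof. by rewrite -NN opprB. Qed.

Lemma N_small a : (forall e, 0 < e -> N a <= e) -> a = 0.
Proof.
move=> H; apply: (@nrm_eq0 _ _ C); apply/eqP; rewrite eq_le N_ge0 andbT.
case: (ltrP 0 (N a)) => // h.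
have h2 : 0 < N a / 2 by lra.
have := H _ h2; lra.
Qed.

Lemma N_le_star a : N a <= N (st a).
Proof.
have [h|h] := eqVneq (N a) 0; first by rewrite h N_ge0.
have hp : 0 < N a by rewrite lt_def h N_ge0.
rewrite -(ler_pM2r hp) -expr2 -(nrm_cstar C).
exact: nrm_submul.
Qed.

Lemma N_star a : N (st a) = N a.
Proof.
apply/eqP; rewrite eq_le N_le_star andbT.
by have := N_le_star (st a); rewrite star_invol.
Qed.

Lemma N1 : N 1 <= 1.
Proof.
have := nrm_cstar C 1; rewrite st1 mulr1 expr2 => h.
have [->|h0] := eqVneq (N 1) 0; first by rewrite ler01.
suff -> : N 1 = 1 by [].
by apply: (mulIf h0); rewrite mul1r -h.
Qed.

Lemma N_unit z : st z * z = 1 -> N z <= 1.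
Proof.
move=> H; have := nrm_cstar C z; rewrite H => h.
by rewrite -(expr_le1 (n:=2)) // ?N_ge0 // -h N1.
Qed.

Definition hf : R[i] := ((2:R)^-1)%:C%C.

Lemma normc_hf : normc hf = 2^-1.
Proof. by rewrite normc_real // invr_ge0 ler0n. Qed.

Lemma hfhf : hf + hf = 1.
Proof.
rewrite /hf -rmorphD /=.
have -> : (2:R)^-1 + 2^-1 = 1 by lra.
by [].
Qed.

Lemma N_hf a : N (hf *: a) = 2^-1 * N a.
Proof. by rewrite nrm_scale normc_hf. Qed.

Lemma st_hf a : st (hf *: a) = hf *: st a.
Proof. by rewrite star_scale /hf conjc_real. Qed.

Lemma hf2 (a : A) : hf *: (a + a) = a.
Proof. by rewrite scalerDr -scalerDl hfhf scale1r. Qed.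

Lemma small_pow (e : R) : 0 < e -> exists M : nat, 4 * (2^-1) ^+ M < e.
Proof.
move=> he; set M := Num.Def.archi_bound (4 / e); exists M.
have hM : 4 / e < M%:R by apply: archi_boundP; rewrite ltW // divr_gt0.
have h2 : (M%:R : R) <= (2 ^ M)%:R by rewrite ler_nat ltnW // ltn_expl.
have hP : (0 : R) < (2 ^ M)%:R by rewrite ltr0n expn_gt0.
rewrite exprVn -natrX ltr_pdivrMr //.
rewrite ltr_pdivrMr // in hM.
have h3 : M%:R * e <= (2 ^ M)%:R * e by rewrite ler_wpM2r // ltW.
rewrite mulrC; move: hM h3; lra.
Qed.

Lemma N_smallK a (K : R) : 0 <= K -> (forall e, 0 < e -> N a <= K * e) -> a = 0.
Proof.
move=> hK H; apply: N_small => e he.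
have hK1 : 0 < K + 1 by lra.
have := H (e / (K + 1)) (divr_gt0 he hK1).
have h1 : K / (K + 1) <= 1 by rewrite ler_pdivrMr // mul1r; lra.
have -> : K * (e / (K + 1)) = (K / (K + 1)) * e by rewrite mulrA mulrAC.
move=> h2; apply: le_trans h2 _.
by rewrite -[X in _ <= X]mul1r ler_wpM2r // ltW.
Qed.

Fixpoint Ys (x : A) (n : nat) : A :=
  if n is n'.+1 then hf *: (x + Ys x n' * Ys x n') else 0.

Section Sqrt.
Variable x : A.
Hypothesis hx : st x = x.
Hypothesis nx : N x <= 16^-1.
Local Notation Y := (Ys x).

Lemma Y_bound n : N (Y n) <= 8^-1.
Proof.
elim: n => [|n IH] /=; first by rewrite N0; lra.
rewrite N_hf.
have h1 := nrm_triangle C x (Y n * Y n).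
have h2 := nrm_submul C (Y n) (Y n).
have h0 := N_ge0 (Y n).
have h3 : N (Y n) * N (Y n) <= 8^-1 * 8^-1 by apply: ler_pM.
have h4 := le_trans h2 h3.
have h5 := le_trans h1 (lerD nx h4).
lra.
Qed.

Lemma Y_st n : st (Y n) = Y n.
Proof.
elim: n => [|n IH] /=; first exact: st0.
by rewrite st_hf star_add star_mul IH hx.
Qed.

Lemma Y_comm n w : w * x = x * w -> w * Y n = Y n * w.
Proof.
move=> Hw; elim: n => [|n IH] /=; first by rewrite mulr0 mul0r.
rewrite -scalerAr -scalerAl mulrDr mulrDl Hw mulrA IH -!mulrA IH.
by [].
Qed.

Lemma Y_diff n : N (Y n.+1 - Y n) <= (2^-1) ^+ n.
Proof.
elim: n => [|n IH].
  rewrite /= subr0 mulr0 addr0 N_hf expr0.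
  move: nx; lra.
have Hc : Y n.+1 * Y n = Y n * Y n.+1.
  by rewrite (Y_comm n (w := Y n.+1)) // (Y_comm n.+1 (w := x)).
have -> : Y n.+2 - Y n.+1 = hf *: ((Y n.+1 + Y n) * (Y n.+1 - Y n)).
  have -> : Y n.+2 = hf *: (x + Y n.+1 * Y n.+1) by [].
  have {2}-> : Y n.+1 = hf *: (x + Y n * Y n) by [].
  rewrite -scalerBr; congr (_ *: _).
  rewrite mulrDl !mulrBr Hc addrA subrK.
  by rewrite opprD addrACA subrr add0r.
have hA : N (Y n.+1 + Y n) <= 4^-1.
  have := le_trans (nrm_triangle C _ _) (lerD (Y_bound n.+1) (Y_bound n)); lra.
have hB := nrm_submul C (Y n.+1 + Y n) (Y n.+1 - Y n).
have hC := ler_pM (N_ge0 _) (N_ge0 _) hA IH.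
have hD : 0 <= (2^-1 : R) ^+ n by rewrite exprn_ge0 // invr_ge0 ler0n.
rewrite N_hf exprS.
move: (le_trans hB hC) hD; lra.
Qed.

Lemma Y_cauchy n k : N (Y (n + k) - Y n) <= 2 * (2^-1) ^+ n - 2 * (2^-1) ^+ (n + k).
Proof.
elim: k => [|k IH]; first by rewrite addn0 subrr N0 subrr.
have -> : Y (n + k.+1) - Y n = (Y (n + k).+1 - Y (n + k)) + (Y (n + k) - Y n).
  by rewrite addnS addrA subrK.
have h := le_trans (nrm_triangle C _ _) (lerD (Y_diff (n + k)) IH).
rewrite addnS exprS.
move: h; lra.
Qed.

Lemma Y_cauchy2 e : 0 < e -> exists M, forall m n, (M <= m)%N -> (M <= n)%N ->
  N (Y m - Y n) < e.
Proof.
move=> he; have [M HM] := small_pow he; exists M => m n hm hn.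
have hb k : N (Y (M + k) - Y M) <= 2 * (2^-1) ^+ M.
  have := Y_cauchy M k.
  have : 0 <= (2^-1 : R) ^+ (M + k) by rewrite exprn_ge0 // invr_ge0 ler0n.
  lra.
have -> : Y m - Y n = (Y m - Y M) - (Y n - Y M) by rewrite opprB addrA subrK.
have h1 := hb (m - M)%N; have h2 := hb (n - M)%N.
rewrite !subnKC // in h1 h2.
have h3 := nrm_triangle C (Y m - Y M) (- (Y n - Y M)).
rewrite NN in h3.
move: h1 h2 h3 HM; lra.
Qed.

Lemma sqrt_fix : exists y, [/\ st y = y, N y <= 8^-1, y = hf *: (x + y * y) &
  forall w, w * x = x * w -> w * y = y * w].
Proof.
have [y Hy] := nrm_complete Y_cauchy2.
exists y.
have Hn e : 0 < e -> exists n, N (Y n - y) < e.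
  by move=> he; have [K HK] := Hy e he; exists K; apply: HK.
have Hn1 e : 0 < e -> exists n, N (Y n - y) < e /\ N (Y n.+1 - y) < e.
  by move=> he; have [K HK] := Hy e he; exists K; split; apply: HK.
have Ny : N y <= 8^-1.
  apply/ler_addgt0Pr => e he; have [n hn] := Hn e he.
  have -> : y = Y n - (Y n - y) by rewrite opprB addrC subrK.
  have h3 := nrm_triangle C (Y n) (- (Y n - y)).
  rewrite NN in h3.
  have h4 := Y_bound n.
  move: h3 h4 hn; lra.
split => //.
- apply/eqP; rewrite -subr_eq0; apply/eqP; apply: (@N_smallK _ 2) => // e he.
  have [n hn] := Hn e he.
  have -> : st y - y = st (y - Y n) + (Y n - y) by rewrite stB Y_st addrA subrK.
  have := le_trans (nrm_triangle C _ _) (lerD (le_refl (N (st (y - Y n)))) (ltW hn)).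
  rewrite N_star NB; move: hn; lra.
- apply/eqP; rewrite -subr_eq0; apply/eqP; apply: (@N_smallK _ 2) => // e he.
  have [n [hn hn1]] := Hn1 e he.
  have E1 : Y n.+1 = hf *: (x + Y n * Y n) by [].
  have -> : y - hf *: (x + y * y) = (y - Y n.+1) + hf *: (Y n * Y n - y * y).
    by rewrite E1 scalerBr !scalerDr !opprD !addrA subrK.
  have -> : Y n * Y n - y * y = Y n * (Y n - y) + (Y n - y) * y.
    by rewrite mulrBr mulrBl addrA subrK.
  have h1 := ler_pM (N_ge0 _) (N_ge0 _) (Y_bound n) (ltW hn).
  have h2 := ler_pM (N_ge0 _) (N_ge0 _) (ltW hn) Ny.
  have h3 := le_trans (nrm_triangle C _ _) (lerD (nrm_submul C (Y n) (Y n - y)) (nrm_submul C (Y n - y) y)).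
  have h4 := le_trans (nrm_triangle C _ _) (lerD (le_refl (N (y - Y n.+1))) (le_refl (N (hf *: (Y n * (Y n - y) + (Y n - y) * y))))).
  move: h4; rewrite N_hf NB.
  move: h1 h2 h3 hn1; lra.
- move=> w Hw; apply/eqP; rewrite -subr_eq0; apply/eqP.
  apply: (@N_smallK _ (2 * N w)); first by rewrite mulr_ge0 // N_ge0.
  move=> e he; have [n hn] := Hn e he.
  have -> : w * y - y * w = w * (y - Y n) + (Y n - y) * w.
    by rewrite mulrBr mulrBl (Y_comm n Hw) addrA subrK.
  have h1 := ler_pM (N_ge0 _) (N_ge0 _) (le_refl (N w)) (ltW hn).
  have h2 := ler_pM (N_ge0 _) (N_ge0 _) (ltW hn) (le_refl (N w)).
  have h3 := le_trans (nrm_triangle C _ _) (lerD (nrm_submul C w (y - Y n)) (nrm_submul C (Y n - y) w)).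
  move: h1 h2 h3; rewrite NB; nra.
Qed.

End Sqrt.
Lemma sqrt_ex x : st x = x -> N x <= 16^-1 -> exists s,
  [/\ st s = s, s * s = 1 - x & forall w, w * x = x * w -> w * s = s * w].
Proof.
move=> hx nx; have [y [Hst Ny Hfix Hc]] := sqrt_fix hx nx.
have hyy : y + y = x + y * y.
  transitivity ((hf + hf) *: (x + y * y)); first by rewrite scalerDl -Hfix.
  by rewrite hfhf scale1r.
exists (1 - y); split.
- by rewrite stB st1 Hst.
- rewrite mulrBl mul1r mulrBr mulr1.
  have -> : 1 - y - (y - y * y) = 1 - (y + y) + y * y.
    by rewrite opprB opprD !addrA addrAC.
  by rewrite hyy opprD addrA subrK.
- by move=> w Hw; rewrite mulrBr mulrBl mulr1 mul1r (Hc w Hw).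
Qed.

Section Hom.
Variable psi : A -> A.
Hypothesis Hadd : forall a b, psi (a + b) = psi a + psi b.
Hypothesis Hsc : forall (c : R[i]) a, psi (c *: a) = c *: psi a.
Hypothesis Hmul : forall a b, psi (a * b) = psi a * psi b.
Hypothesis Hst : forall a, psi (st a) = st (psi a).
Hypothesis H1 : psi 1 = 1.

Lemma psi0 : psi 0 = 0.
Proof. by apply: (addrI (psi 0)); rewrite -Hadd !addr0. Qed.

Lemma psiN a : psi (- a) = - psi a.
Proof. by apply: (addrI (psi a)); rewrite -Hadd !subrr psi0. Qed.

Lemma psiB a b : psi (a - b) = psi a - psi b.
Proof. by rewrite Hadd psiN. Qed.

Lemma hom_bound a : N a <= 2^-1 -> N (psi a) <= 1.
Proof.
move=> na.
set u := st a * a.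
have hu : st u = u by rewrite /u star_mul star_invol.
have nu : N u <= 4^-1.
  rewrite /u nrm_cstar expr2.
  have := ler_pM (N_ge0 a) (N_ge0 a) na na; lra.
set x := u * u.
have hx : st x = x by rewrite /x star_mul hu.
have nx : N x <= 16^-1.
  have := le_trans (nrm_submul C u u) (ler_pM (N_ge0 u) (N_ge0 u) nu nu); lra.
have [s [hs hss hsc]] := sqrt_ex hx nx.
have us : u * s = s * u by apply: hsc; rewrite /x mulrA.
set z := u + 'i%C *: s.
have hz : st z = u - 'i%C *: s by rewrite /z star_add star_scale conjc_i hu hs scaleNr.
have zz : st z * z = 1.
  rewrite hz /z mulrDr !mulrBl -!scalerAl -!scalerAr us scalerA.
  have hi : ('i%C * 'i%C : R[i]) = -1 by rewrite -expr2 sqr_i.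
  rewrite addrA subrK hi scaleN1r opprK -/x hss.
  by rewrite addrC subrK.
have hzs : z + st z = u + u by rewrite hz /z addrACA subrr addr0.
have npz : N (psi z) <= 1 by apply: N_unit; rewrite -Hst -Hmul zz H1.
have nps : N (st (psi z)) <= 1 by rewrite N_star.
have hpu : psi u = hf *: (psi z + st (psi z)).
  by rewrite -Hst -Hadd hzs Hadd hf2.
have npu : N (psi u) <= 1.
  rewrite hpu N_hf.
  have := le_trans (nrm_triangle C _ _) (lerD npz nps); lra.
have : N (psi a) ^+ 2 <= 1 by rewrite -nrm_cstar -Hst -Hmul.
by rewrite expr_le1 // N_ge0.
Qed.

Lemma hom_lip a : N (psi a) <= 2 * N a.
Proof.
have [h|h] := eqVneq (N a) 0.
  by rewrite (@nrm_eq0 _ _ C _ h) psi0 N0 mulr0.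
have hp : 0 < N a by rewrite lt_def h N_ge0.
set c := (2 * N a)^-1.
have hc : 0 < c by rewrite invr_gt0 mulr_gt0.
have h1 : N ((c%:C)%C *: a) <= 2^-1.
  rewrite nrm_scale normc_real; last exact: ltW.
  by rewrite /c invfM -mulrA mulVf // mulr1.
have := hom_bound h1; rewrite Hsc nrm_scale normc_real; last exact: ltW.
move=> h2.
have e : N (psi a) = (2 * N a) * (c * N (psi a)).
  by rewrite mulrA mulfV ?mul1r // gt_eqF // mulr_gt0.
by rewrite e -[X in _ <= X]mulr1 ler_wpM2l // mulr_ge0 // N_ge0.
Qed.
End Hom.



Lemma aut_one psi : star_aut C psi -> psi 1 = 1.
Proof.
case=> [[g _ gK] _ _ Hm _].
by have := Hm 1 (g 1); rewrite mul1r gK mulr1.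
Qed.

Lemma aut_lip psi : star_aut C psi -> forall a, N (psi a) <= 2 * N a.
Proof.
move=> Ha; have H1 := aut_one Ha; case: Ha => _ Hadd Hsc Hmul Hst.
exact: hom_lip.
Qed.

Lemma aut_unique (S : A -> Prop) psi1 psi2 : star_aut C psi1 -> star_aut C psi2 ->
  cstar_generates C S -> (forall s, S s -> psi1 s = psi2 s) -> psi1 =1 psi2.
Proof.
move=> Ha1 Ha2 Hgen HS a.
have L1 := aut_lip Ha1; have L2 := aut_lip Ha2.
have O1 := aut_one Ha1; have O2 := aut_one Ha2.
case: Ha1 => _ A1 S1 M1 T1; case: Ha2 => _ A2 S2 M2 T2.
apply: (Hgen (fun a => psi1 a = psi2 a)) => //.
split; first by rewrite O1 O2.
split.
- by move=> x y hx hy; rewrite A1 A2 hx hy.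
- by move=> c x hx; rewrite S1 S2 hx.
- by move=> x y hx hy; rewrite M1 M2 hx hy.
- by move=> x hx; rewrite T1 T2 hx.
move=> x Hx; apply/eqP; rewrite -subr_eq0; apply/eqP.
apply: (@N_smallK _ 4) => // e he.
have [b [hb hn]] := Hx e he.
have -> : psi1 x - psi2 x = psi1 (x - b) - psi2 (x - b).
  by rewrite (psiB A1) (psiB A2) hb opprB addrA subrK.
have h1 := L1 (x - b); have h2 := L2 (x - b).
have h3 := nrm_triangle C (psi1 (x - b)) (- psi2 (x - b)).
rewrite NN in h3.
move: h1 h2 h3 hn; lra.
Qed.

End CS.
Section Rho.
Variables (D : Type) (A : pzRingType) (w : D -> A).

Lemma rho_acc g a : foldl (fun acc f => w f * acc) a g = rho w g * a.
Proof.
elim: g a => [|f g IH] a /=; first by rewrite /rho /= mul1r.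
by rewrite /rho /= !IH mulr1 mulrA.
Qed.

Lemma rho_nil : rho w [::] = 1. Proof. by []. Qed.

Lemma rho_cons f g : rho w (f :: g) = rho w g * w f.
Proof. by rewrite /rho /= rho_acc mulr1. Qed.

Lemma rho_cat g1 g2 : rho w (g1 ++ g2) = rho w g2 * rho w g1.
Proof. by rewrite /rho foldl_cat rho_acc. Qed.

Lemma rho_one (P : pred D) g : (forall f, P f -> w f = 1) -> all P g -> rho w g = 1.
Proof.
move=> H; elim: g => [|f g IH] //= /andP[Hf Hg].
by rewrite rho_cons IH // H // mulr1.
Qed.

End Rho.

Lemma rho_reduce (D : finType) (A : pzRingType) (w : D -> A) (rv : D -> D) g : (forall f, w (rv f) * w f = 1) ->
  rho w (reduce rv g) = rho w g.
Proof.
move=> Hw; elim: g => [|f g IH] //=.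
rewrite rho_cons -IH.
case: (reduce rv g) => [|h t] /=; first by rewrite rho_cons.
case: ifP => [/eqP ->|_]; last by rewrite !rho_cons.
by rewrite rho_cons -mulrA Hw mulr1.
Qed.

Lemma rho_hom (D : Type) (A B : pzRingType) (psi : A -> B) (w1 : D -> A) (w2 : D -> B)
  (m : D -> D) : psi 1 = 1 -> (forall a b, psi (a * b) = psi a * psi b) ->
  (forall f, psi (w1 f) = w2 (m f)) -> forall g, psi (rho w1 g) = rho w2 (map m g).
Proof.
move=> H1 Hm Hw; elim => [|f g IH] //=.
by rewrite !rho_cons Hm IH Hw.
Qed.

Lemma rho_unit (R : realType) (A : algType R[i]) (C : cstar_struct A) (D : Type) (w : D -> A) :
  (forall f, star C (w f) * w f = 1) -> forall g, star C (rho w g) * rho w g = 1.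
Proof.
move=> Hw; elim => [|f g IH]; first by rewrite rho_nil st1 mulr1.
by rewrite rho_cons star_mul -mulrA (mulrA (star C (rho w g))) IH mul1r Hw.
Qed.
Unset Implicit Arguments.
Theorem mainTheorem3
  (V D : finType) (rev : D -> D) (src : D -> V)
  (Hgraph : graph_axioms rev) (Hconn : connected_graph rev src)
  (tau : {set D}) (r : V) (Htau : spanning_tree rev src tau)
  (tp : V -> V -> seq D) (Htp : tree_paths rev src tau tp)
  (R : realType) (A : algType R[i]) (C : cstar_struct A)
  (wt : D -> A)
  (Hunit : forall f, unitary C (wt f))
  (Hrev : forall f, wt (rev f) = star C (wt f))
  (Htree : forall f, f \in tau -> wt f = 1)
  (Hgen : cstar_generates C (fun a => exists f, a = wt f))
  (phiV : V -> V) (phiD : D -> D) (Hphi : graph_aut rev src phiV phiD)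
  (tp' : V -> V -> seq D) (Htp' : tree_paths rev src (phiD @: tau) tp') :
  let r' := phiV r in
  let P (g : seq D) := tp r r' ++ g ++ tp r' r in
  let l (f : D) := tp r (src f) ++ f :: tp (tgt rev src f) r in
  let l' (f : D) := tp' r' (src f) ++ f :: tp' (tgt rev src f) r' in
  let wt' (f : D) := rho wt (P (l' f)) in
  [/\ (* (1) *)
      (forall psi, star_aut C psi ->
         (forall f, f \notin tau -> psi (wt f) = wt' (phiD f)) ->
         forall f, psi (wt f) = wt' (phiD f))
      /\ (forall psi1 psi2, star_aut C psi1 -> star_aut C psi2 ->
           (forall f, f \notin tau -> psi1 (wt f) = wt' (phiD f)) ->
           (forall f, f \notin tau -> psi2 (wt f) = wt' (phiD f)) ->
           psi1 =1 psi2),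
      (* (2) *)
      cstar_generates C (fun a => exists f, a = wt' (phiD f))
    & (* (3) *)
      exists beta : seq D -> seq D,
        [/\ pi1_aut rev src r beta,
            forall f, f \notin tau ->
              beta (reduce rev (l f)) = reduce rev (P (l' (phiD f)))
          & forall psi, star_aut C psi ->
              (forall f, psi (wt f) = wt' (phiD f)) ->
              forall x, pi1 rev src r x -> psi (rho wt x) = rho wt (beta x)]].
Proof.
move=> r' P l l' wt'.
case: Hgraph => rvK _.
case: Htau => Hts _ Htac.
case: Hphi => [[pV pVK pVK'] [pD pDK pDK'] Hprv Hpsrc].
set T' := phiD @: tau.
have inT' f : (f \in T') = (pD f \in tau).
  apply/imsetP/idP => [[t Ht ->]|Hf]; first by rewrite pDK.
  by exists (pD f) => //; rewrite pDK'.
have pDrv f : pD (rev f) = rev (pD f).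
  by apply: (can_inj pDK); rewrite pDK' Hprv pDK'.
have pDsrc f : src (pD f) = pV (src f).
  by apply: (can_inj pVK); rewrite -Hpsrc pDK' pVK'.
have HT'rv f : (rev f \in T') = (f \in T') by rewrite !inT' pDrv Hts.
have HT'ac : acyclic rev src T'.
  move=> g Hg Hc; apply: (Htac (map pD g)).
    apply/allP => f /mapP [e He ->]; rewrite -inT'; exact: (allP Hg).
  exact: (cycle_map pDrv pDsrc (can_inj pDK') (can_inj pVK') Hc).
have Tw x y : walk rev src x y (tp x y) by have /andP[/andP[? ?] ?] := Htp x y.
have Tr x y : reduced rev (tp x y) by have /andP[/andP[? ?] ?] := Htp x y.
have Ta x y : all (fun f => f \in tau) (tp x y) by have /andP[/andP[? ?] ?] := Htp x y.
have Tw' x y : walk rev src x y (tp' x y) by have /andP[/andP[? ?] ?] := Htp' x y.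
have Tr' x y : reduced rev (tp' x y) by have /andP[/andP[? ?] ?] := Htp' x y.
have Ta' x y : all (fun f => f \in T') (tp' x y) by have /andP[/andP[? ?] ?] := Htp' x y.
have Hinv f : wt (rev f) * wt f = 1 by rewrite Hrev; case: (Hunit f).
have Wa x y : rho wt (tp x y) = 1.
  exact: (rho_one Htree (Ta x y)).
have W1T' x g : walk rev src x x g -> all (fun f => f \in T') g -> rho wt g = 1.
  by move=> Hw Ha; rewrite -(rho_reduce _ Hinv) (tree_reduce rvK HT'ac Hw Ha).
set Vv := fun x => rho wt (tp' r' x).
set Qv := fun x => rho wt (tp' x r').
have VQ x : Vv x * Qv x = 1.
  rewrite /Vv /Qv -rho_cat; apply: (W1T' x).
    exact: (walk_catP (Tw' _ _) (Tw' _ _)).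
  by rewrite all_cat !Ta'.
have QV x : Qv x * Vv x = 1.
  rewrite /Vv /Qv -rho_cat; apply: (W1T' r').
    exact: (walk_catP (Tw' _ _) (Tw' _ _)).
  by rewrite all_cat !Ta'.
have Hl' h : wt' h = rho wt (l' h).
  by rewrite /wt' /P !rho_cat !Wa mulr1 mul1r.
have Hl'f h : rho wt (l' h) = Qv (tgt rev src h) * wt h * Vv (src h).
  by rewrite /l' rho_cat rho_cons.
have walk_l' h : walk rev src r' r' (l' h).
  rewrite /l'; apply: (walk_catP (Tw' r' (src h))).
  by rewrite /= eqxx Tw'.
have Tel g : forall x y, walk rev src x y g -> rho wt' g = Qv y * rho wt g * Vv x.
  elim: g => [|h g IH] x y /=.
    by move/eqP ->; rewrite rho_nil mulr1 QV.
  move=> /andP[/eqP Hx Hw].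
  rewrite !rho_cons (IH _ _ Hw) Hl' Hl'f Hx !mulrA.
  by rewrite -(mulrA (Qv y * rho wt g)) VQ mulr1.
have P1 psi : star_aut C psi -> (forall f, f \notin tau -> psi (wt f) = wt' (phiD f)) ->
    forall f, psi (wt f) = wt' (phiD f).
  move=> Hpsi H f; have [Hf|Hf] := boolP (f \in tau); last exact: H.
  rewrite Htree // (aut_one Hpsi) Hl'; symmetry; apply: (W1T' r') => //.
  by rewrite /l' all_cat /= !Ta' (imset_f phiD Hf).
split.
- split; first exact: P1.
  move=> psi1 psi2 H1 H2 E1 E2.
  apply: (aut_unique H1 H2 Hgen) => s [f ->].
  by rewrite (P1 _ H1 E1) (P1 _ H2 E2).
- move=> B HB HBS; apply: (Hgen B HB) => s [f ->].
  case: HB => B1 [] Badd Bsc Bmul Bst Bcl.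
  have Bw h : B (wt' h) by apply: HBS; exists (pD h); rewrite pDK'.
  have Brho g : B (rho wt' g).
    elim: g => [|h g IH]; first exact: B1.
    by rewrite rho_cons; apply: Bmul.
  have EV : rho wt' (tp r r' ++ tp' r' r) = Vv r.
    rewrite (Tel _ r r (walk_catP (Tw r r') (Tw' r' r))) rho_cat Wa mulr1.
    by rewrite QV mul1r.
  have BV : B (Vv r) by rewrite -EV.
  have QVs : Qv r = star C (Vv r).
    have HuV : star C (Vv r) * Vv r = 1 := rho_unit (fun f => proj1 (Hunit f)) _.
    by rewrite -[Qv r]mul1r -HuV -mulrA VQ mulr1.
  have Hl : rho wt (l f) = wt f by rewrite /l rho_cat rho_cons !Wa mulr1 mul1r.
  have Hwl : walk rev src r r (l f).
    by apply: (walk_catP (Tw r (src f))); rewrite /= eqxx Tw.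
  have Ewt : wt f = Vv r * rho wt' (l f) * Qv r.
    rewrite (Tel _ _ _ Hwl) Hl !mulrA VQ mul1r -mulrA VQ mulr1 //.
  rewrite Ewt QVs; exact: (Bmul _ _ (Bmul _ _ BV (Brho _)) (Bst _ BV)).
have Ra : reduce rev (tp r' r ++ tp r r') = [::].
  by apply: (tree_reduce rvK Htac (walk_catP (Tw _ _) (Tw _ _))); rewrite all_cat !Ta.
have Ra2 : reduce rev (tp r r' ++ tp r' r) = [::].
  by apply: (tree_reduce rvK Htac (walk_catP (Tw _ _) (Tw _ _))); rewrite all_cat !Ta.
have sandw u y : reduce rev u = [::] -> reduced rev y -> reduce rev (u ++ y ++ u) = y.
  move=> Hu Hy; rewrite (reduce_catl rvK) Hu /= reduce_catr Hu cats0.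
  exact: reducedK.
have injD := can_inj pDK.
have injD' := can_inj pDK'.
have Hwb x : walk rev src r r x -> walk rev src r r (P (map phiD x)).
  move=> Hx; apply: (walk_catP (Tw r r')); apply: (walk_catP _ (Tw r' r)).
  exact: (walk_map Hprv Hpsrc Hx).
have Hgam x : pi1 rev src r x ->
    reduce rev (map pD (tp r' r ++ reduce rev (P (map phiD x)) ++ tp r r')) = x.
  move=> /andP[_ Rx].
  rewrite !map_cat -(reduce_map pDrv injD') (reduce_mid rvK) /P !map_cat (mapK pDK).
  have -> : map pD (tp r' r) ++ (map pD (tp r r') ++ x ++ map pD (tp r' r)) ++ map pD (tp r r')
    = (map pD (tp r' r) ++ map pD (tp r r')) ++ x ++ (map pD (tp r' r) ++ map pD (tp r r')).
    by rewrite !catA.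
  by rewrite sandw // -map_cat (reduce_map pDrv injD') Ra.
exists (fun x => reduce rev (P (map phiD x))); split.
- split.
  + move=> x /andP[Hw _]; apply/andP; split; last exact: reduce_reduced.
    exact: (reduce_walk rvK (Hwb x Hw)).
  + move=> x y _ _.
    rewrite /P -(reduce_map Hprv injD) (reduce_mid rvK) -(reduce_catl rvK) -reduce_catr !map_cat.
    have -> : (tp r r' ++ map phiD x ++ tp r' r) ++ tp r r' ++ map phiD y ++ tp r' r
      = (tp r r' ++ map phiD x) ++ (tp r' r ++ tp r r') ++ (map phiD y ++ tp r' r).
      by rewrite !catA.
    by rewrite (reduce_nil_mid rvK _ _ Ra) !catA.
  + move=> x y Hx Hy E.
    by rewrite -(Hgam x Hx) -(Hgam y Hy) E.
  + move=> y /andP[Hy Ry].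
    exists (reduce rev (map pD (tp r' r ++ y ++ tp r r'))).
      apply/andP; split; last exact: reduce_reduced.
      apply: (reduce_walk rvK).
      have Hw : walk rev src r' r' (tp r' r ++ y ++ tp r r').
        by apply: (walk_catP (Tw r' r)); apply: (walk_catP Hy (Tw r r')).
      by have := walk_map pDrv pDsrc Hw; rewrite /r' pVK.
    rewrite /P -(reduce_map Hprv injD) (reduce_mid rvK) (mapK pDK').
    have -> : tp r r' ++ (tp r' r ++ y ++ tp r r') ++ tp r' r
      = (tp r r' ++ tp r' r) ++ y ++ (tp r r' ++ tp r' r) by rewrite !catA.
    by rewrite sandw.
- move=> f Hf.
  have Rl : reduced rev (l f).
    rewrite /l reduced_cat Tr /=.
    have Hrf : rev f \notin tau by rewrite Hts.
    apply/andP; split.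
      have := Tr (tgt rev src f) r; have := Ta (tgt rev src f) r.
      case: (tp (tgt rev src f) r) => [|h t] //= /andP[Hh _] Hr.
      rewrite Hr andbT; apply/negP => /eqP Eh.
      by move: Hrf; rewrite -Eh Hh.
    case E: (tp r (src f)) => [|e t] //.
    apply: contraNneq Hf => ->.
    rewrite Hts; apply: (allP (Ta r (src f))).
    by rewrite E /= mem_last.
  rewrite (reducedK Rl); congr (reduce rev (P _)).
  rewrite /l /l' map_cat /=; congr (_ ++ _ :: _).
    apply: (tree_path_uniq rvK HT'rv HT'ac (x := r') (y := src (phiD f))).
    - by rewrite Hpsrc; exact: (walk_map Hprv Hpsrc (Tw r (src f))).
    - exact: Tw'.
    - by rewrite (reduced_map Hprv injD).
    - exact: Tr'.
    - by apply/allP => e /mapP [e' He' ->]; apply: imset_f; exact: (allP (Ta _ _) _ He').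
    - exact: Ta'.
  apply: (tree_path_uniq rvK HT'rv HT'ac (x := tgt rev src (phiD f)) (y := r')).
  - by rewrite (tgt_map Hprv Hpsrc); exact: (walk_map Hprv Hpsrc (Tw (tgt rev src f) r)).
  - exact: Tw'.
  - by rewrite (reduced_map Hprv injD).
  - exact: Tr'.
  - by apply/allP => e /mapP [e' He' ->]; apply: imset_f; exact: (allP (Ta _ _) _ He').
  - exact: Ta'.
- move=> psi Hpsi Hw x /andP[Hx _].
  have Hm : forall a b, psi (a * b) = psi a * psi b by case: Hpsi.
  rewrite (rho_hom (aut_one Hpsi) Hm Hw).
  rewrite (Tel _ _ _ (walk_map Hprv Hpsrc Hx)).
  have Q1 : Qv r' = 1 by apply: (W1T' r'); [exact: Tw' | exact: Ta'].
  rewrite /r' in Q1.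
  rewrite [Vv _]Q1 Q1 mulr1 mul1r.
  by rewrite (rho_reduce _ Hinv) /P !rho_cat !Wa mulr1 mul1r.
Qed.
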